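(* Let $(A,G)$ be an admissible pair with $A=(a_{ij})\in M_{Q_0}(\mathbb Z)$, and let $\Omega=\{i_1,\ldots,i_n\}$ be a $G$-orbit in $Q_0$. Then the coefficients $a^{(n)}_{ij}$ of $A^{(n)}=\mu_{i_n}\circ\cdots\circ\mu_{i_1}(A)$ are given by $$a^{(n)}_{ij}=\begin{cases}-a_{ij}&\text{if } i\in\Omega\text{ or } j\in\Omega,\\ a_{ij}+\frac12\sum_{k=1}^n\big(|a_{i,i_k}|a_{i_k,j}+a_{i,i_k}|a_{i_k,j}|\big)&\text{otherwise.}\end{cases}$$
   Context: $Q_0$ finite; $A$ skew-symmetrizable ($DA$ skew-symmetric for a positive integer diagonal $D$). Mutation $\mu_k(B)=(b'_{ij})$: $b'_{ij}=-b_{ij}$ if $k\in\{i,j\}$, else $b_{ij}+\tfrac12(|b_{ik}|b_{kj}+b_{ik}|b_{kj}|)$. An automorphism of $A$ is a permutation $g$ of $Q_0$ with $a_{gi,gj}=a_{ij}$; a group $G$ of such permutations is admissible (and $(A,G)$ an admissible pair) if for distinct $i,j$ in the same $G$-orbit there is no path of length $1$ or $2$ from $i$ to $j$ in the valued quiver of $A$ (i.e. $a_{ij}\le0$ and no $k$ with $a_{ik}>0$, $a_{kj}>0$). *)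

(* Defs.v *)
From HB Require Import structures.
From mathcomp Require Import all_boot all_order all_algebra all_fingroup.
Set Implicit Arguments. Unset Strict Implicit. Unset Printing Implicit Defensive.
Import Order.TTheory GRing.Theory Num.Theory.
Local Open Scope ring_scope.

Definition qmat (Q0 : finType) := Q0 -> Q0 -> int.

Definition skew_symmetrizable (Q0 : finType) (A : qmat Q0) : Prop :=
  exists d : Q0 -> nat, (forall i, (0 < d i)%N) /\
    forall i j, (d i)%:Z * A i j = - ((d j)%:Z * A j i).

(* mutation mu_k.  The term |b_ik| b_kj + b_ik |b_kj| is always even, so
   integer division by 2 is exact and equals the rational 1/2 (...). *)
Definition mutation (Q0 : finType) (k : Q0) (B : qmat Q0) : qmat Q0 :=
  fun i j =>
    if (i == k) || (j == k) then - B i j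
    else B i j + ((`|B i k| * B k j + B i k * `|B k j|) %/ 2)%Z.

(* mu_{i_n} o ... o mu_{i_1} (A) for s = [:: i_1; ...; i_n] *)
Definition mutate_seq (Q0 : finType) (s : seq Q0) (A : qmat Q0) : qmat Q0 :=
  foldl (fun B k => mutation k B) A s.

Definition is_automorphism (Q0 : finType) (A : qmat Q0) (g : {perm Q0}) : Prop :=
  forall i j, A (g i) (g j) = A i j.

Definition admissible_pair (Q0 : finType) (A : qmat Q0) (G : {group {perm Q0}}) : Prop :=
  (forall g, g \in G -> is_automorphism A g) /\
  (forall i j, j \in orbit 'P G i -> i != j ->
     A i j <= 0 /\ ~ (exists k, 0 < A i k /\ 0 < A k j)).

(* Main.v *)
Require Import Defs.
From HB Require Import structures.
From mathcomp Require Import all_boot all_order all_algebra all_fingroup.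
From mathcomp Require Import zify.
Import Order.TTheory GRing.Theory Num.Theory.
Local Open Scope ring_scope.

Lemma even_term (a b : int) : (2 %| `|a| * b + a * `|b|)%Z.
Proof.
have H : forall c : int, (2 %| c + `|c|)%Z.
  move=> c; case: (lerP 0 c) => hc.
  - by rewrite (ger0_norm hc); apply/dvdzP; exists c; lia.
  - by rewrite (ltr0_norm hc) subrr dvdz0.
have H2 : forall c : int, (2 %| `|c| - c)%Z.
  move=> c; case: (lerP 0 c) => hc.
  - by rewrite (ger0_norm hc) subrr dvdz0.
  - by rewrite (ltr0_norm hc); apply/dvdzP; exists (- c); lia.
case: (lerP 0 a) => ha.
- by rewrite (ger0_norm ha) -mulrDr dvdz_mull.
- by rewrite (ltr0_norm ha) mulNr addrC -mulrBr dvdz_mull.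
Qed.

Lemma gen_lemma (Q0 : finType) (A : qmat Q0) (P : pred Q0) (p : seq Q0) :
  (forall x y, P x -> P y -> A x y = 0) ->
  uniq p -> all P p ->
  forall i j,
    mutate_seq p A i j =
      if (i \in p) || (j \in p) then - A i j
      else A i j + ((\sum_(k <- p) (`|A i k| * A k j + A i k * `|A k j|)) %/ 2)%Z.
Proof.
move=> HZ; elim/last_ind: p => [|p k IH].
  by move=> _ _ i j; rewrite /mutate_seq /= big_nil div0z addr0.
rewrite rcons_uniq all_rcons => /andP[kp up] /andP[Pk Pp] i j.
have IH' := IH up Pp.
rewrite /mutate_seq foldl_rcons -/(mutate_seq p A) /mutation.
have Pin : forall x, x \in p -> P x by move=> x; move/allP: Pp; apply.
have Bik : forall x, mutate_seq p A x k = A x k.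
  move=> x; rewrite IH' (negbTE kp) orbF.
  case: ifP => xp; first by rewrite (HZ _ _ (Pin _ xp) Pk) oppr0.
  rewrite big1_seq ?div0z ?addr0 // => l /= lp.
  by rewrite (HZ _ _ (Pin _ lp) Pk) normr0 !mulr0 addr0.
have Bkj : forall y, mutate_seq p A k y = A k y.
  move=> y; rewrite IH' (negbTE kp) /=.
  case: ifP => yp; first by rewrite (HZ _ _ Pk (Pin _ yp)) oppr0.
  rewrite big1_seq ?div0z ?addr0 // => l /= lp.
  by rewrite (HZ _ _ Pk (Pin _ lp)) normr0 !mul0r addr0.
rewrite !mem_rcons !in_cons.
case: (eqVneq i k) => [->|ik] /=; first by rewrite Bkj.
case: (eqVneq j k) => [->|jk] /=; first by rewrite orbT Bik.
rewrite Bik Bkj IH'.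
case: (boolP (i \in p)) => ip /=.
  by rewrite (HZ _ _ (Pin _ ip) Pk) normr0 !mul0r addr0 ?div0z ?addr0.
case: (boolP (j \in p)) => jp /=.
  by rewrite (HZ _ _ Pk (Pin _ jp)) normr0 !mulr0 addr0 ?div0z ?addr0.
rewrite big_rcons /= -addrA -divzDl //.
apply: (big_ind (fun x : int => (2 %| x)%Z)) => // [x y|l _]; [exact: rpredD | exact: even_term].
Qed.

Theorem mainTheorem8 (Q0 : finType) (A : Q0 -> Q0 -> int)
  (G : {group {perm Q0}}) (i0 : Q0) (s : seq Q0) :
  skew_symmetrizable A ->
  admissible_pair A G ->
  uniq s ->
  (forall x, (x \in s) = (x \in orbit 'P G i0)) ->
  forall i j,
    mutate_seq s A i j =
      if (i \in orbit 'P G i0) || (j \in orbit 'P G i0) then - A i j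
      else A i j + ((\sum_(k <- s) (`|A i k| * A k j + A i k * `|A k j|)) %/ 2)%Z.
Proof.
move=> [d [dpos dA]] [_ adm] us hs i j.
have HZ : forall x y, x \in orbit 'P G i0 -> y \in orbit 'P G i0 -> A x y = 0.
  move=> x y hx hy.
  have := dA x y; have := dpos x; have := dpos y.
  case: (eqVneq x y) => [<-|nxy].
    move=> _ h1 h2; lia.
  have yx : y \in orbit 'P G x by rewrite (orbit_transl _ hy) orbit_sym.
  have [h3 _] := adm _ _ yx nxy.
  have xy : x \in orbit 'P G y by rewrite orbit_sym.
  have nyx : y != x by rewrite eq_sym.
  have [h4 _] := adm _ _ xy nyx.
  move=> h1 h2 h5; nia.
rewrite (@gen_lemma _ A (fun x => x \in orbit 'P G i0) s) //.
- by rewrite !hs.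
- by apply/allP => x; rewrite hs.
Qed.
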